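(* The VC-density of the edge relation on the class $\mathcal J$ of all Johnson graphs is $2$.
   Context: For $m\ge k$ and a set $X$ with $|X|=m$, the Johnson graph $J(m,k)$ has as vertices the $k$-element subsets of $X$, two vertices adjacent iff their intersection has size $k-1$; $\mathcal J=\{J(m,k)\mid k,m\in\mathbb N, k\le m\}$. For a graph $G$, the edge relation set system is $(V(G),\mathcal S_G)$ with $\mathcal S_G=\{N(v)\mid v\in V(G)\}$ ($N(v)$ the set of neighbours of $v$). Its shatter function is $\pi_G(n)=\max\{|\{S\cap A\mid S\in\mathcal S_G\}| : A\subseteq V(G), |A|=n\}$. For a class $\mathcal C$ of graphs, $\pi_{\mathcal C}(n)=\max\{\pi_G(n)\mid G\in\mathcal C\}$, the VC-dimension of the edge relation on $\mathcal C$ is the supremum over $G\in\mathcal C$ of the largest size of a set $A$ with $\{A\cap S\mid S\in\mathcal S_G\}=\mathcal P(A)$, and the VC-density of the edge relation on $\mathcal C$ is $\inf\{r\in\mathbb R^+ : \pi_{\mathcal C}(n)\in\mathcal O(n^r)\}$ if that VC-dimension is finite, and $\infty$ otherwise. *)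

(* Defs.v *)
From HB Require Import structures.
From mathcomp Require Import all_boot all_order all_algebra.
From mathcomp Require Import boolp classical_sets reals constructive_ereal ereal.
From mathcomp Require Import exp.
Set Implicit Arguments. Unset Strict Implicit. Unset Printing Implicit Defensive.
Import Order.TTheory GRing.Theory Num.Theory.

Section EdgeSetSystem.
Variables (V : finType) (e : rel V).

Definition nbhd (v : V) : {set V} := [set u | e v u].

Definition traces (A : {set V}) : {set {set V}} := [set nbhd v :&: A | v : V].

(* shatter function pi_G(n) (max over the empty family is 0) *)
Definition shatter_fn (n : nat) : nat :=
  \max_(A : {set V} | #|A| == n) #|traces A|.

Definition shattered (A : {set V}) : bool := traces A == powerset A.
End EdgeSetSystem.

Definition jvert (m k : nat) := {A : {set 'I_m} | #|A| == k}.

(* adjacent iff |u ∩ v| = k - 1 (written |u ∩ v| + 1 = k to avoid truncation) *)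
Definition jedge (m k : nat) : rel (jvert m k) :=
  fun u v => #|val u :&: val v|.+1 == k.

Definition johnson_vcdim_finite : Prop :=
  exists d : nat, forall m k : nat, k <= m ->
    forall A : {set jvert m k}, shattered (@jedge m k) A -> #|A| <= d.

Local Open Scope ring_scope.

(* pi_J(n) ∈ O(n^r), with pi_J(n) = sup_{k<=m} pi_{J(m,k)}(n) unfolded *)
Definition johnson_shatter_bigO (R : realType) (r : R) : Prop :=
  exists c : R, exists N : nat, forall n : nat, (N <= n)%N ->
    forall m k : nat, (k <= m)%N ->
      ((shatter_fn (@jedge m k) n)%:R : R) <= c * (n%:R `^ r).

Definition johnson_vc_density (R : realType) : \bar R :=
  if `[< johnson_vcdim_finite >] then
    (inf [set r : R | 0 < r /\ johnson_shatter_bigO r])%:E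
  else +oo%E.

(* Main.v *)
Require Import Defs.
From HB Require Import structures.
From mathcomp Require Import all_boot all_order all_algebra.
From mathcomp Require Import zify.
Set Implicit Arguments. Unset Strict Implicit. Unset Printing Implicit Defensive.

Section Sets.
Variables (T : finType) (k : nat).
Implicit Types (a b c v : {set T}).

Lemma eq_sub_card a b : a \subset b -> #|b| <= #|a| -> a = b.
Proof. by move=> ab ba; apply/eqP; rewrite eqEcard ab ba. Qed.

Lemma triple a b v : #|a| = k -> #|b| = k -> #|v| = k ->
  #|a :&: v|.+1 = k -> #|b :&: v|.+1 = k ->
  k <= #|a :&: b :&: v| + 2 /\ (#|a :&: b :&: v| + 2 = k -> v \subset a :|: b).
Proof.
move=> ha hb hv hav hbv.
have hU := cardsUI (a :&: v) (b :&: v).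
have hI : (a :&: v) :&: (b :&: v) = a :&: b :&: v.
  by apply/setP=> x; rewrite !inE; case: (x \in a); case: (x \in b); case: (x \in v).
rewrite hI in hU.
have sU : (a :&: v) :|: (b :&: v) \subset v by rewrite subUset !subsetIr.
have lU := subset_leq_card sU.
split; first by lia.
move=> h; have eU : (a :&: v) :|: (b :&: v) = v by apply: eq_sub_card => //; lia.
by rewrite -eU; apply/subsetP=> x; rewrite !inE; case/orP=> /andP[-> _]; rewrite ?orbT.
Qed.

Lemma sub_I a b c : a :&: b \subset c -> a :&: b \subset a :&: c.
Proof. by move=> h; rewrite subsetI subsetIl. Qed.

Lemma lem2a a b v c : #|a| = k -> #|b| = k -> #|v| = k -> #|c| = k ->
  #|a :&: b|.+1 = k -> #|a :&: v|.+1 = k -> #|b :&: v|.+1 = k ->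
  a :&: b \subset v ->
  #|a :&: c|.+1 = k -> #|b :&: c|.+1 = k -> #|c :&: v|.+1 = k ->
  a :&: b \subset c.
Proof.
move=> ha hb hv hc hab hav hbv sv hac hbc hcv.
have [t1 t2] := triple ha hb hc hac hbc.
have l1 : #|a :&: b :&: c| <= #|a :&: b| by apply: subset_leq_card; apply: subsetIl.
have [e|ne] := eqVneq #|a :&: b :&: c| #|a :&: b|.
  have := @eq_sub_card (a :&: b :&: c) (a :&: b) (subsetIl _ _).
  rewrite e leqnn => /(_ isT) <-; exact: subsetIr.
have /t2 cU : #|a :&: b :&: c| + 2 = k by lia.
have eA : a :&: b = a :&: v.
  by apply: eq_sub_card; [exact: sub_I | lia].
have eB : a :&: b = b :&: v.
  apply: eq_sub_card; [|lia]. by rewrite subsetI subsetIr.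
have sc : c :&: v \subset a :&: b :&: c.
  apply/subsetP=> x; rewrite inE => /andP[xc xv].
  rewrite inE xc andbT.
  have := subsetP cU x xc; rewrite inE => /orP[xa|xb].
    by rewrite eA inE xa.
  by rewrite eB inE xb.
have := subset_leq_card sc; lia.
Qed.

Lemma lem2b a b v c : #|a| = k -> #|b| = k -> #|v| = k -> #|c| = k ->
  #|a :&: b|.+1 = k -> #|a :&: v|.+1 = k -> #|b :&: v|.+1 = k ->
  v \subset a :|: b ->
  #|a :&: c|.+1 = k -> #|b :&: c|.+1 = k -> #|c :&: v|.+1 = k ->
  c \subset a :|: b.
Proof.
move=> ha hb hv hc hab hav hbv sv hac hbc hcv.
have [t1 t2] := triple ha hb hc hac hbc.
have l1 : #|a :&: b :&: c| <= #|a :&: b| by apply: subset_leq_card; apply: subsetIl.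
have [e|ne] := eqVneq #|a :&: b :&: c| #|a :&: b|; last first.
  by apply: t2; lia.
have Cc : a :&: b \subset c.
  have := @eq_sub_card (a :&: b :&: c) (a :&: b) (subsetIl _ _).
  rewrite e leqnn => /(_ isT) <-; exact: subsetIr.
(* |v :&: a :&: b| = k - 2 *)
have hU := cardsUI (a :&: v) (b :&: v).
have hI : (a :&: v) :&: (b :&: v) = a :&: b :&: v.
  by apply/setP=> x; rewrite !inE; case: (x \in a); case: (x \in b); case: (x \in v).
have hUv : (a :&: v) :|: (b :&: v) = v.
  apply/setP=> x; rewrite !inE; have := subsetP sv x; rewrite inE.
  by case: (x \in a); case: (x \in b); case: (x \in v) => //= ->.
rewrite hI hUv in hU.
apply/subsetP=> x xc; apply/negPn/negP => xD.
have sc : c :&: v \subset a :&: b :&: v.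
  apply/subsetP=> y; rewrite inE => /andP[yc yv].
  rewrite inE yv andbT.
  have [eyx|nyx] := eqVneq y x; first by move: xD; rewrite -eyx (subsetP sv _ yv).
  have ecx : c = (a :&: b) :|: [set x].
    apply/esym/eq_sub_card.
      by rewrite subUset Cc sub1set xc.
    have nx : x \notin a :&: b by apply: contra xD; rewrite !inE => /andP[->].
    rewrite setUC cardsU1 nx /=; lia.
  by move: yc; rewrite ecx !inE (negbTE nyx) orbF.
have := subset_leq_card sc; lia.
Qed.

Lemma neq_lt a b : #|a| = k -> #|b| = k -> a != b -> #|a :&: b| < k.
Proof.
move=> ha hb ne; rewrite ltn_neqAle -{2}ha subset_leq_card ?subsetIl // andbT.
apply: contra ne => /eqP e.
have e1 : a :&: b = a by apply: eq_sub_card; [exact: subsetIl| lia].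
have sab : a \subset b by rewrite -e1 subsetIr.
by rewrite eqEcard sab /= hb ha.
Qed.

End Sets.


Lemma card_bigcup_le (T I : finType) (P : pred I) (F : I -> {set T}) :
  #|\bigcup_(i | P i) F i| <= \sum_(i | P i) #|F i|.
Proof.
elim/big_rec2: _ => [|i x y _ h]; first by rewrite cards0.
by rewrite (leq_trans (leq_card_setU _ _)) // leq_add2l.
Qed.

Lemma arith1 x y k : k <= x + 2 -> x <= y -> y < k -> y.+2 <= k -> x + 2 = k.
Proof. lia. Qed.

Lemma arith2 x y k : x + 2 = k -> y.+2 <= k -> y <= x.
Proof. lia. Qed.
Lemma arith3 x y k : x + 2 = k -> x <= y -> k <= y + 2.
Proof. lia. Qed.

Lemma arith4 x y k : y.+1 = k -> y <= x -> x < k -> x.+1 == k.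
Proof. move=> *; apply/eqP; lia. Qed.
Lemma arith5 u i x y k : u + i = k + k -> i.+1 = k -> y + x = k + k -> y <= u -> x < k -> x.+1 == k.
Proof. move=> *; apply/eqP; lia. Qed.
Lemma arith6 x y k : k <= x + 2 -> x <= y -> x != y -> y.+1 = k -> x + 2 = k.
Proof. move=> ? ? /eqP ? ?; lia. Qed.
Lemma arith7 y x k : y.+1 = k -> x.+1 = k -> x <= y.
Proof. lia. Qed.
Lemma arith8 u i x y k : u + i = k + k -> i.+1 = k -> x + y = k + k -> y.+1 = k -> u <= x.
Proof. lia. Qed.

Section J.
Variables m k : nat.
Local Notation V := (jvert m k).
Implicit Types (a b c v w : V) (A : {set V}).

Lemma cardV a : #|val a| = k.
Proof. by case: a => /= ? /eqP. Qed.

Definition S2 a b : {set V} :=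
  [set w : V | [&& val a :&: val b \subset val w, val w \subset val a :|: val b
              & k <= #|val a :&: val b| + 2]].
Definition P1 A a b : {set V} := [set c in A | val a :&: val b \subset val c].
Definition P2 A a b : {set V} := [set c in A | val c \subset val a :|: val b].
Definition Cands A a b : {set {set V}} :=
  [set nbhd (@jedge m k) w :&: A | w in S2 a b] :|:
  [set P1 A a b; P1 A a b :\ b; P2 A a b; P2 A a b :\ b].
Definition Fam A : {set {set V}} :=
  set0 |: ([set [set a] | a in A] :|: \bigcup_(a in A) \bigcup_(b in A) Cands A a b).

Lemma card_S2 a b : #|S2 a b| <= 16.
Proof.
set I := val a :&: val b; set U := val a :|: val b.
have [hk|hk] := leqP k (#|I| + 2); last first.
  suff -> : S2 a b = set0 by rewrite cards0.
  by apply/setP=> w; rewrite !inE -/I leqNgt hk !andbF.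
have inj : {in S2 a b &, injective (fun w : V => val w :\: I)}.
  move=> w1 w2; rewrite !inE => /and3P[s1 _ _] /and3P[s2 _ _] e.
  have h1 := setID (val w1) I; have h2 := setID (val w2) I.
  rewrite (setIidPr s1) e in h1; rewrite (setIidPr s2) in h2.
  by apply: val_inj; rewrite -{1}h1.
rewrite -(card_in_imset inj).
have sub : (fun w : V => val w :\: I) @: S2 a b \subset powerset (U :\: I).
  apply/subsetP=> X /imsetP[w]; rewrite inE => /and3P[_ s2 _] ->.
  by rewrite inE setSD.
apply: (leq_trans (subset_leq_card sub)); rewrite card_powerset.
have hUI := cardsUI (val a) (val b); rewrite !cardV -/I -/U in hUI.
have sIU : I \subset U by apply/subsetP=> x; rewrite !inE => /andP[->].
have hD := cardsD U I; rewrite (setIidPr sIU) in hD.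
have h4 : #|U| - #|I| <= 4 by lia.
by rewrite hD (leq_trans (leq_pexp2l (isT : 0 < 2) h4)).
Qed.

Lemma card_Cands A a b : #|Cands A a b| <= 20.
Proof.
rewrite (leq_trans (leq_card_setU _ _)) //.
have h1 := leq_trans (leq_imset_card (fun w => nbhd (@jedge m k) w :&: A) (S2 a b)) (card_S2 a b).
have h2 : #|[set P1 A a b; P1 A a b :\ b; P2 A a b; P2 A a b :\ b]| <= 4.
  have U1 (X : {set {set V}}) x : #|X :|: [set x]| <= #|X|.+1.
    by rewrite setUC cardsU1; case: (_ \notin _); rewrite ?add1n ?add0n.
  apply: (leq_trans (U1 _ _)); rewrite ltnS; apply: (leq_trans (U1 _ _)); rewrite ltnS.
  by rewrite cardsU1 cards1; case: (_ \notin _).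
exact: leq_add h1 h2.
Qed.

Lemma card_Fam A : #|Fam A| <= 1 + #|A| + 20 * #|A| ^ 2.
Proof.
rewrite /Fam cardsU1.
have h0 : #|[set [set a] | a in A]| <= #|A| by apply: leq_imset_card.
have h1 : #|\bigcup_(a in A) \bigcup_(b in A) Cands A a b| <= #|A| * (#|A| * 20).
  apply: (leq_trans (card_bigcup_le _ _)).
  rewrite -sum_nat_const; apply: leq_sum => a _.
  apply: (leq_trans (card_bigcup_le _ _)).
  rewrite -sum_nat_const; apply: leq_sum => b _.
  exact: card_Cands.
have h2 := leq_card_setU [set [set a] | a in A] (\bigcup_(a in A) \bigcup_(b in A) Cands A a b).
have hb : (set0 \notin [set [set a] | a in A] :|: \bigcup_(a in A) \bigcup_(b in A) Cands A a b) <= 1 by case: (_ \notin _).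
move: h0 h1 h2 hb; set X := #|[set [set a] | a in A]|; set Y := #|\bigcup_(a in A) _|.
set Z := #|_ :|: _|; set t := (_ \notin _) : nat.
move=> h0 h1 [h2 _] hb. clearbody X Y Z t. nia.
Qed.

Lemma traces_sub A : traces (@jedge m k) A \subset Fam A.
Proof.
apply/subsetP=> _ /imsetP[v _ ->].
set T := nbhd (@jedge m k) v :&: A.
have inT c : (c \in T) = (#|val v :&: val c|.+1 == k) && (c \in A) by rewrite !inE.
have TA : T \subset A by apply: subsetIr.
have adjT c : c \in T -> #|val c :&: val v|.+1 = k /\ c \in A.
  by rewrite inT setIC => /andP[/eqP].
have ck := cardV.
case: (posnP #|T|) => [/cards0_eq ->|Tpos]; first by rewrite setU11.
case: (eqVneq #|T| 1) => [/eqP/cards1P[a Ta]|T1].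
  apply/setU1P; right; apply/setUP; left; apply/imsetP; exists a => //.
  by rewrite (subsetP TA) // Ta set11.
have : 1 < #|T| by lia.
case/card_gt1P => a0 [b0 [a0T b0T ab0]].
apply/setU1P; right.
have inC a b : a \in A -> b \in A -> T \in Cands A a b ->
    T \in [set [set a] | a in A] :|: \bigcup_(a in A) \bigcup_(b in A) Cands A a b.
  move=> aA bA h; apply/setUP; right.
  by apply/bigcupP; exists a => //; apply/bigcupP; exists b.
case: (boolP [exists a in T, exists b in T, (a != b) && (#|val a :&: val b|.+1 != k)]).
  case/existsP => a /andP[aT /existsP[b /andP[bT /andP[ab nadj]]]].
  have [va aA] := adjT a aT; have [vb bA] := adjT b bT.
  apply: (inC a b aA bA); apply/setUP; left; apply/imsetP; exists v => //.
  have [t1 t2] := triple (ck a) (ck b) (ck v) va vb.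
  have l1 : #|val a :&: val b :&: val v| <= #|val a :&: val b|.
    by apply: subset_leq_card; apply: subsetIl.
  have l2 : #|val a :&: val b| < k := neq_lt (ck a) (ck b) ab.
  have n2 : #|val a :&: val b|.+2 <= k by move: nadj; rewrite neq_ltn => /orP[//|]; rewrite ltnS leqNgt l2.
  have e : #|val a :&: val b :&: val v| + 2 = k.
 exact: arith1 t1 l1 l2 n2.
  have eI : val a :&: val b :&: val v = val a :&: val b.
    by apply: eq_sub_card; [apply: subsetIl | exact: arith2 e n2].
  rewrite inE; apply/and3P; split; last exact: arith3 e l1.
    by rewrite -eI subsetIr.
  exact: t2.
move/existsPn => H.
have allAdj a b : a \in T -> b \in T -> a != b -> #|val a :&: val b|.+1 = k.
  move=> aT bT ab; have := H a; rewrite aT /= => /existsPn /(_ b).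
  by rewrite bT ab /= negbK => /eqP.
have vT : v \notin T.
  by apply/negP => /adjT [h _]; move: h; rewrite setIid ck => /esym/n_Sn.
have ab := allAdj a0 b0 a0T b0T ab0.
have [va aA] := adjT a0 a0T; have [vb bA] := adjT b0 b0T.
have [t1 t2] := triple (ck a0) (ck b0) (ck v) va vb.
have l1 : #|val a0 :&: val b0 :&: val v| <= #|val a0 :&: val b0|.
  by apply: subset_leq_card; apply: subsetIl.
have adj2 c : c \in T -> c != a0 -> c != b0 ->
    #|val a0 :&: val c|.+1 = k /\ #|val b0 :&: val c|.+1 = k.
  move=> cT ca cb; split; apply: allAdj => //; by rewrite eq_sym.
have [e|ne] := eqVneq #|val a0 :&: val b0 :&: val v| #|val a0 :&: val b0|.
  have Iv : val a0 :&: val b0 \subset val v.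
    have eI : val a0 :&: val b0 :&: val v = val a0 :&: val b0.
      by apply: eq_sub_card; [apply: subsetIl | rewrite e].
    by rewrite -eI subsetIr.
  have eT : T = P1 A a0 b0 :\ v.
    apply/setP=> c; apply/idP/idP.
      move=> cT; have [vc cA] := adjT c cT.
      rewrite !inE cA /=; apply/andP; split.
        by apply: contraNneq vT => <-.
      have [->|nca] := eqVneq c a0; first exact: subsetIl.
      have [->|ncb] := eqVneq c b0; first exact: subsetIr.
      have [h1 h2] := adj2 c cT nca ncb.
      exact: (lem2a (ck a0) (ck b0) (ck v) (ck c) ab va vb Iv h1 h2 vc).
    move=> /setD1P[cv /setIdP[cA Ic]].
    rewrite inT cA andbT.
    have s1 : val a0 :&: val b0 \subset val v :&: val c by rewrite subsetI Iv Ic.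
    exact: arith4 ab (subset_leq_card s1) (neq_lt (ck v) (ck c) (ltac:(by rewrite eq_sym))).
  have [vA|vA] := boolP (v \in A).
    have eP : P1 A a0 b0 = P1 A a0 v.
      have s1 : val a0 :&: val b0 \subset val a0 :&: val v by rewrite subsetI subsetIl Iv.
      have eI : val a0 :&: val b0 = val a0 :&: val v.
        by apply: eq_sub_card s1 _; exact: arith7 ab va.
      by rewrite /P1 eI.
    apply: (inC a0 v aA vA); apply/setUP; right.
    by rewrite eT eP !(in_setU, in_setU1, in_set1) eqxx /= ?orbT.
  have eP : P1 A a0 b0 :\ v = P1 A a0 b0.
    apply/setP=> c; rewrite !inE; case: eqP => // ->.
    by rewrite (negbTE vA).
  apply: (inC a0 b0 aA bA); apply/setUP; right.
  by rewrite eT eP !(in_setU, in_setU1, in_set1) eqxx /= ?orbT.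
have vU : val v \subset val a0 :|: val b0 by apply: t2; exact: arith6 t1 l1 ne ab.
have hab := cardsUI (val a0) (val b0); rewrite !ck in hab.
have eT : T = P2 A a0 b0 :\ v.
  apply/setP=> c; apply/idP/idP.
    move=> cT; have [vc cA] := adjT c cT.
    rewrite !inE cA /=; apply/andP; split.
      by apply: contraNneq vT => <-.
    have [->|nca] := eqVneq c a0; first exact: subsetUl.
    have [->|ncb] := eqVneq c b0; first exact: subsetUr.
    have [h1 h2] := adj2 c cT nca ncb.
    exact: (lem2b (ck a0) (ck b0) (ck v) (ck c) ab va vb vU h1 h2 vc).
  move=> /setD1P[cv /setIdP[cA cU]].
  rewrite inT cA andbT.
  have hvc := cardsUI (val v) (val c); rewrite !ck in hvc.
  have s1 : val v :|: val c \subset val a0 :|: val b0 by rewrite subUset vU cU.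
  exact: arith5 hab ab hvc (subset_leq_card s1) (neq_lt (ck v) (ck c) (ltac:(by rewrite eq_sym))).
have [vA|vA] := boolP (v \in A).
  have eP : P2 A a0 b0 = P2 A a0 v.
    have s1 : val a0 :|: val v \subset val a0 :|: val b0 by rewrite subUset subsetUl vU.
    have hav := cardsUI (val a0) (val v); rewrite !ck in hav.
    have eU : val a0 :|: val v = val a0 :|: val b0.
      apply: eq_sub_card s1 _.
      exact: arith8 hab ab hav va.
    by rewrite /P2 eU.
  apply: (inC a0 v aA vA); apply/setUP; right.
  by rewrite eT eP !(in_setU, in_setU1, in_set1) eqxx /= ?orbT.
have eP : P2 A a0 b0 :\ v = P2 A a0 b0.
  apply/setP=> c; rewrite !inE; case: eqP => // ->.
  by rewrite (negbTE vA).
apply: (inC a0 b0 aA bA); apply/setUP; right.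
by rewrite eT eP !(in_setU, in_setU1, in_set1) eqxx /= ?orbT.
Qed.

End J.

Lemma traces_bound m k (A : {set jvert m k}) :
  #|traces (@jedge m k) A| <= 1 + #|A| + 20 * #|A| ^ 2.
Proof. exact: leq_trans (subset_leq_card (traces_sub A)) (card_Fam A). Qed.

Lemma shatter_bound m k n : shatter_fn (@jedge m k) n <= 1 + n + 20 * n ^ 2.
Proof. by apply/bigmax_leqP => A /eqP <-; exact: traces_bound. Qed.

Lemma pow_big j : 1 + (j + 12) + 20 * (j + 12) ^ 2 < 2 ^ (j + 12).
Proof.
elim: j => [|j IH]; first by [].
rewrite (_ : j.+1 + 12 = (j + 12).+1) // [2 ^ _.+1]expnS; have : 12 <= j + 12 by rewrite leq_addl.
move: IH; rewrite -!mulnn; generalize (j + 12) => n; generalize (2 ^ n) => p => h1 h2.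
have h3 : 12 * n <= n * n by rewrite leq_mul2r h2 orbT.
lia.
Qed.

Lemma vc_small n : 2 ^ n <= 1 + n + 20 * n ^ 2 -> n <= 11.
Proof.
move=> h; rewrite leqNgt; apply/negP => hn.
have := pow_big (n - 12); rewrite subnK //; lia.
Qed.

Lemma vcdim_fin : johnson_vcdim_finite.
Proof.
exists 11 => m k _ A /eqP sh; apply: vc_small.
by rewrite -card_powerset -sh traces_bound.
Qed.

Lemma starP n (i : 'I_n) : #|[set ord0; lift ord0 i]| == 2.
Proof. by rewrite cards2 neq_lift. Qed.

Definition star n (i : 'I_n) : jvert n.+1 2 := exist (fun B : {set 'I_n.+1} => #|B| == 2) _ (starP i).

Lemma star_inj n : injective (@star n).
Proof.
move=> i j /(congr1 val) /= e.
have : lift ord0 i \in [set ord0; lift ord0 j] by rewrite -e !inE eqxx orbT.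
rewrite !inE eq_sym (negbTE (neq_lift _ _)) /= => /eqP; exact: lift_inj.
Qed.

Lemma cardI2 (T : finType) (X : {set T}) a b : a \notin X -> #|X :&: [set a; b]| = (b \in X).
Proof.
move=> aX.
have -> : X :&: [set a; b] = X :&: [set b].
  apply/setP=> x; rewrite !inE; case: eqP => [->|] //=; by rewrite (negbTE aX).
case: (boolP (b \in X)) => bX.
  by rewrite (setIidPr _) ?cards1 // sub1set.
suff -> : X :&: [set b] = set0 by rewrite cards0.
by apply/setP=> x; rewrite !inE; case: (x =P b) => [->|_]; rewrite ?andbT ?andbF // (negbTE bX).
Qed.

Lemma lower n : 'C(n, 2) <= shatter_fn (@jedge n.+1 2) n.
Proof.
set A := [set star i | i in [set: 'I_n]].
have cA : #|A| = n by rewrite card_imset ?cardsT ?card_ord //; exact: star_inj.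
apply: (@leq_trans #|traces (@jedge n.+1 2) A|); last first.
  rewrite /shatter_fn; apply: (@leq_bigmax_cond _ (fun A0 : {set jvert n.+1 2} => #|A0| == n) (fun A0 => #|traces (@jedge n.+1 2) A0|)); by rewrite cA.
have := cards_draws A 2; rewrite cA => <-; apply: subset_leq_card; apply/subsetP => B.
rewrite inE => /andP[BA /cards2P[x [y [xy eB]]]].
have xA : x \in A by rewrite (subsetP BA) // eB !inE eqxx.
have yA : y \in A by rewrite (subsetP BA) // eB !inE eqxx orbT.
case/imsetP: xA => i _ exi; case/imsetP: yA => j _ eyj.
have ij : lift ord0 i != lift ord0 j.
  apply: contra xy => /eqP /lift_inj eij; by rewrite exi eyj eij.
have wP : #|[set lift ord0 i; lift ord0 j]| == 2 by rewrite cards2 ij.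
set w : jvert n.+1 2 := exist (fun B : {set 'I_n.+1} => #|B| == 2) _ wP.
apply/imsetP; exists w => //.
rewrite eB; apply/setP => c; rewrite in_set2 in_setI [c \in nbhd _ _]in_set.
case: (boolP (c \in A)) => [/imsetP[l _ ->]|cA']; last first.
  rewrite andbF; apply/negbTE; apply: contra cA' => /orP[]/eqP->.
    by rewrite exi; apply/imsetP; exists i; rewrite ?inE.
  by rewrite eyj; apply/imsetP; exists j; rewrite ?inE.
rewrite andbT /jedge /= cardI2; last first.
  by rewrite !inE !(negbTE (neq_lift _ _)).
rewrite exi eyj in_set2 !(inj_eq (@star_inj n)) !(inj_eq (@lift_inj _ ord0)).
by case: (_ || _).
Qed.

Unset Implicit Arguments.
From mathcomp Require Import boolp classical_sets reals constructive_ereal ereal.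
From mathcomp Require Import exp lra.
Import Order.TTheory GRing.Theory Num.Theory.

Lemma arith9 n : 0 < n -> 1 + n + 20 * n ^ 2 <= 22 * n ^ 2.
Proof. move=> h; rewrite -mulnn; nia. Qed.

Lemma arith10 n : 2 <= n -> n ^ 2 <= 4 * 'C(n, 2).
Proof.
move=> h; have e : 2 * 'C(n, 2) = n * n.-1.
  elim: n {h} => [|n IH] //; rewrite binS bin1 mulnDr IH; case: n {IH} => // n /=; nia.
rewrite -mulnn; nia.
Qed.


Local Open Scope ring_scope.

Section Analysis.
Variable R : realType.

Lemma bigO2 : johnson_shatter_bigO (2%:R : R).
Proof.
exists 22%:R, 1%N => n n1 m k _.
rewrite powR_mulrn // -natrX -natrM ler_nat.
apply: (ssrnat.leq_trans (shatter_bound m k n)); exact: arith9 _ n1.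
Qed.

Lemma lb (r : R) : 0 < r -> johnson_shatter_bigO r -> 2%:R <= r.
Proof.
move=> r0 [c [N H]].
rewrite leNgt; apply/negP => r2.
set s := 2%:R - r.
have s0 : 0 < s by rewrite subr_gt0.
set M := `|c| * 4%:R + 1.
have M0 : 0 < M by rewrite ltr_wpDl // mulr_ge0.
set x0 := M `^ s^-1.
set n := maxn (maxn N 2) (Num.truncn x0).+1.
have nN : (N <= n)%N by rewrite /n !leq_max leqnn.
have n2 : (2 <= n)%N by rewrite /n !leq_max leqnn orbT.
have nx : x0 <= n%:R.
  apply: (le_trans (ltW (truncnS_gt x0))); rewrite ler_nat /n leq_max leqnn orbT //.
have nR0 : 0 < (n%:R : R) by rewrite ltr0n; case: n n2 {nN nx}.
have H1 := H n nN n.+1 2%N (leq_trans n2 (leqnSn n)).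
have H2 : ((n ^ 2)%N%:R : R) <= 4%:R * (c * n%:R `^ r).
  apply: (le_trans _ (ler_wpM2l (ler0n _ 4) H1)).
  rewrite -natrM ler_nat; apply: (ssrnat.leq_trans (arith10 _ n2)).
  by rewrite leq_mul2l lower.
have e2 : (n ^ 2)%N%:R = (n%:R : R) `^ r * n%:R `^ s.
  rewrite -powRD; last by rewrite (gt_eqF nR0) implybT.
  by rewrite /s addrC subrK powR_mulrn ?natrX.
have e4 : 4%:R * (c * n%:R `^ r) = (n%:R : R) `^ r * (4%:R * c) by rewrite mulrA mulrC.
rewrite e2 e4 in H2.
have Hs : (n%:R : R) `^ s <= 4%:R * c.
  by move: H2; rewrite ler_pM2l // powR_gt0.
have Hs2 : M <= (n%:R : R) `^ s.
  have -> : M = x0 `^ s.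
    by rewrite /x0 -powRrM mulVf ?gt_eqF // powRr1 // ltW.
  apply: ge0_ler_powR => //; first exact: ltW.
    by rewrite nnegrE powR_ge0.
  by rewrite nnegrE ltW.
have hM : M <= 4%:R * c := le_trans Hs2 Hs.
have h4 : 4%:R * c <= `|c| * 4%:R.
  by rewrite mulrC ler_wpM2r // real_ler_norm // num_real.
move: hM h4; rewrite /M; lra.
Qed.

End Analysis.

Theorem mainTheorem10 (R : realType) : johnson_vc_density R = (2%:R)%:E.
Proof.
rewrite /johnson_vc_density asboolT; last exact: vcdim_fin.
congr (_%:E).
apply/eqP; rewrite eq_le; apply/andP; split.
  apply: ge_inf.
    by exists 2%:R => r [r0 hr]; exact: lb r0 hr.
  by split; [rewrite ltr0n | exact: bigO2].
apply: lb_le_inf.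
  by exists 2%:R; split; [rewrite ltr0n | exact: bigO2].
by move=> r [r0 hr]; exact: lb r0 hr.
Qed.
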